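(* Let $(A,\mathcal H)$ be a commutative Hopf algebroid and $I$ a normal Hopf ideal of $\mathcal H$. Then $\{h\in\mathcal H:\sum h_1\otimes_A q(h_2)=h\otimes_Aq(1)\}=\{h\in\mathcal H:\sum q(h_1)\otimes_Ah_2=q(1)\otimes_Ah\}$ as subalgebras of $\mathcal H$, where $q:\mathcal H\to\overline{\mathcal H}/\bar I$ is the canonical projection.
   Context: A commutative Hopf algebroid $(A,\mathcal H)$ over a field $\Bbbk$: commutative $\Bbbk$-algebras $A,\mathcal H$ with algebra maps $s,t:A\to\mathcal H$, $\varepsilon:\mathcal H\to A$, $\Delta:\mathcal H\to\mathcal H\otimes_A\mathcal H$ (left factor an $A$-module via $t$, right via $s$), $\mathcal S:\mathcal H\to\mathcal H$ such that $(\mathcal H,\Delta,\varepsilon)$ is a coassociative counital $A$-coring, $\mathcal Ss=t$, $\mathcal St=s$, $\mathcal S^2=\mathrm{id}$, $\sum\mathcal S(u_1)u_2=t\varepsilon(u)$, $\sum u_1\mathcal S(u_2)=s\varepsilon(u)$ ($\Delta(u)=\sum u_1\otimes_Au_2$). A Hopf ideal: ideal $I$ with $\varepsilon(I)=0$, $\Delta(I)\subseteq$ image of $\mathcal H\otimes_AI+I\otimes_A\mathcal H$, $\mathcal S(I)\subseteq I$. Let $\langle s-t\rangle$ be the ideal generated by all $s(a)-t(a)$, $\overline{\mathcal H}=\mathcal H/\langle s-t\rangle$ with classes $\bar x$ and $A$-algebra structure $\eta(a)=\overline{s(a)}=\overline{t(a)}$, and $\bar I=I/\langle s-t\rangle$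 when $\langle s-t\rangle\subseteq I$. $I$ is normal if $\langle s-t\rangle\subseteq I$ and for every $x\in I$, $\sum\overline{x_2}\otimes_A\mathcal S(x_1)x_3\in\overline{\mathcal H}\otimes_A\mathcal H$ lies in the image of $\bar I\otimes_A\mathcal H$. In the tensor products of the claim, $\mathcal H$ is a right $A$-module via $t$ on the left factor and a left $A$-module via $s$ on the right factor, and $\overline{\mathcal H}/\bar I$ is an $A$-module via $\eta$. *)

(* Defs.v *)
From HB Require Import structures.
From mathcomp Require Import all_boot all_order all_algebra.
Set Implicit Arguments. Unset Strict Implicit. Unset Printing Implicit Defensive.
Import GRing.Theory.
Local Open Scope ring_scope.

(* Tensor products over a commutative ring A, via their defining universal   *)
(* property.  An element of (M/KM) (x)_A (N/KN) is represented by a finite    *)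
(* formal sum  sum_i m_i (x) n_i  given as a list of pairs; two such lists    *)
(* denote the same element of the tensor product iff every A-balanced         *)
(* biadditive map M x N -> P (into any abelian group P) that vanishes when    *)
(* one argument lies in the submodule KM resp. KN takes the same value on the *)
(* two sums.  [actM a m] is the right action m.a of A on M, [actN a n] the    *)
(* left action a.n of A on N.  With KM = KN = (fun _ => False) this is just   *)
(* M (x)_A N.                                                                 *)
Definition balanced (A : Type) (M N P : zmodType)
    (actM : A -> M -> M) (actN : A -> N -> N)
    (KM : M -> Prop) (KN : N -> Prop) (b : M -> N -> P) : Prop :=
  [/\ (forall m m' n, b (m + m') n = b m n + b m' n),
      (forall m n n', b m (n + n') = b m n + b m n'),
      (forall a m n, b (actM a m) n = b m (actN a n)),
      (forall m n, KM m -> b m n = 0) &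
      (forall m n, KN n -> b m n = 0)].

Definition tensor_eq (A : Type) (M N : zmodType)
    (actM : A -> M -> M) (actN : A -> N -> N)
    (KM : M -> Prop) (KN : N -> Prop) (x y : seq (M * N)) : Prop :=
  forall (P : zmodType) (b : M -> N -> P), balanced actM actN KM KN b ->
    \sum_(p <- x) b p.1 p.2 = \sum_(p <- y) b p.1 p.2.

Definition tensor3_eq (A : Type) (M1 M2 M3 : zmodType)
    (r1 : A -> M1 -> M1) (l2 r2 : A -> M2 -> M2) (l3 : A -> M3 -> M3)
    (x y : seq (M1 * M2 * M3)) : Prop :=
  forall (P : zmodType) (b : M1 -> M2 -> M3 -> P),
    (forall u u' v w, b (u + u') v w = b u v w + b u' v w) ->
    (forall u v v' w, b u (v + v') w = b u v w + b u v' w) ->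
    (forall u v w w', b u v (w + w') = b u v w + b u v w') ->
    (forall a u v w, b (r1 a u) v w = b u (l2 a v) w) ->
    (forall a u v w, b u (r2 a v) w = b u v (l3 a w)) ->
    \sum_(p <- x) b p.1.1 p.1.2 p.2 = \sum_(p <- y) b p.1.1 p.1.2 p.2.

Section HopfAlgebroid.
Variables (k : fieldType) (A H : comAlgType k).
Variables (s t : {lrmorphism A -> H}).

(* H (x)_A H : left factor a right A-module via t, right factor a left       *)
(* A-module via s.  Elements of H (x)_A H are represented by seq (H * H).     *)
Definition HtH (x y : seq (H * H)) : Prop :=
  tensor_eq (fun a (u : H) => u * t a) (fun a (v : H) => s a * v)
            (fun _ => False) (fun _ => False) x y.

Definition HtHtH (x y : seq (H * H * H)) : Prop :=
  tensor3_eq (fun a (u : H) => u * t a) (fun a (v : H) => s a * v)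
             (fun a (v : H) => v * t a) (fun a (w : H) => s a * w) x y.

Definition st_ideal (x : H) : Prop :=
  exists l : seq (H * A), x = \sum_(p <- l) p.1 * (s p.2 - t p.2).

(* Commutative Hopf algebroid axioms.  The comultiplication is given by a     *)
(* function Delta assigning to each u a representative list of pairs          *)
(* (u_1, u_2) of Delta(u) = sum u_1 (x)_A u_2.  s, t, eps, S are k-algebra   *)
Record hopf_algebroid (eps : {lrmorphism H -> A}) (Delta : H -> seq (H * H))
    (S : {lrmorphism H -> H}) : Prop := {
  Delta_add : forall x y, HtH (Delta (x + y)) (Delta x ++ Delta y);
  Delta_scale : forall (c : k) x,
    HtH (Delta (c *: x)) [seq (c *: p.1, p.2) | p <- Delta x];
  Delta_mul : forall x y,
    HtH (Delta (x * y)) [seq (p.1 * q.1, p.2 * q.2) | p <- Delta x, q <- Delta y];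
  Delta_one : HtH (Delta 1) [:: (1, 1)];
  Delta_s : forall a h,
    HtH (Delta (s a * h)) [seq (s a * p.1, p.2) | p <- Delta h];
  Delta_t : forall a h,
    HtH (Delta (t a * h)) [seq (p.1, t a * p.2) | p <- Delta h];
  eps_s : forall a h, eps (s a * h) = a * eps h;
  eps_t : forall a h, eps (t a * h) = eps h * a;
  Delta_coassoc : forall u,
    HtHtH [seq (q.1, q.2, p.2) | p <- Delta u, q <- Delta p.1]
          [seq (p.1, q.1, q.2) | p <- Delta u, q <- Delta p.2];
  counit_l : forall u, \sum_(p <- Delta u) s (eps p.1) * p.2 = u;
  counit_r : forall u, \sum_(p <- Delta u) t (eps p.2) * p.1 = u;
  S_s : forall a, S (s a) = t a;
  S_t : forall a, S (t a) = s a;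
  S_invol : forall u, S (S u) = u;
  antipode_l : forall u, \sum_(p <- Delta u) S p.1 * p.2 = t (eps u);
  antipode_r : forall u, \sum_(p <- Delta u) p.1 * S p.2 = s (eps u)
}.

Definition is_ideal (I : {pred H}) : Prop :=
  [/\ 0 \in I, (forall x y, x \in I -> y \in I -> x - y \in I) &
      (forall x y, y \in I -> x * y \in I)].

Definition hopf_ideal (eps : {lrmorphism H -> A}) (Delta : H -> seq (H * H))
    (S : {lrmorphism H -> H}) (I : {pred H}) : Prop :=
  [/\ is_ideal I,
      (forall x, x \in I -> eps x = 0),
      (* Delta(I) lies in the image of H (x)_A I + I (x)_A H *)
      (forall x, x \in I -> exists l : seq (H * H),
          all (fun p => (p.1 \in I) || (p.2 \in I)) l /\ HtH (Delta x) l) &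
      (forall x, x \in I -> S x \in I)].

(* Normal Hopf ideal.  The element  sum bar(x_2) (x)_A S(x_1) x_3  of         *)
(* Hbar (x)_A H, Hbar = H/<s-t> (A acting on Hbar via eta(a) = bar(s a)),     *)
(* must lie in the image of Ibar (x)_A H.                                     *)
Definition normal_ideal (Delta : H -> seq (H * H)) (S : {lrmorphism H -> H})
    (I : {pred H}) : Prop :=
  (forall x, st_ideal x -> x \in I) /\
  (forall x, x \in I -> exists l : seq (H * H),
      all (fun p => p.1 \in I) l /\
      tensor_eq (fun a (u : H) => u * s a) (fun a (v : H) => s a * v)
                st_ideal (fun _ => False)
                [seq (q.2, S q.1 * p.2) | p <- Delta x, q <- Delta p.1] l).

End HopfAlgebroid.

(* Main.v *)
Require Import Defs.
From HB Require Import structures.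
From mathcomp Require Import all_boot all_order all_algebra.
From mathcomp Require Import ring.
Set Implicit Arguments. Unset Strict Implicit. Unset Printing Implicit Defensive.
Import GRing.Theory.
Local Open Scope ring_scope.

Section Aux.
Variables (k : fieldType) (A H : comAlgType k).
Variables (s t : {lrmorphism A -> H}) (eps : {lrmorphism H -> A}).
Variables (Delta : H -> seq (H * H)) (S : {lrmorphism H -> H}) (I : {pred H}).
Hypothesis HA : hopf_algebroid s t eps Delta S.
Hypothesis HN : normal_ideal s t Delta S I.

Lemma St a : S (t a) = s a. Proof. exact: (S_t HA a). Qed.
Lemma Ss a : S (s a) = t a. Proof. exact: (S_s HA a). Qed.

Lemma SM x y : S (x * y) = S x * S y. Proof. exact: rmorphM. Qed.
Lemma SD x y : S (x + y) = S x + S y. Proof. exact: rmorphD. Qed.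
Lemma S1 : S 1 = 1. Proof. exact: rmorph1. Qed.

Lemma antR u : \sum_(p <- Delta u) p.1 * S p.2 = s (eps u).
Proof. exact: (antipode_r HA u). Qed.
Lemma antL u : \sum_(p <- Delta u) S p.1 * p.2 = t (eps u).
Proof. exact: (antipode_l HA u). Qed.
Lemma cntL u : \sum_(p <- Delta u) s (eps p.1) * p.2 = u.
Proof. exact: (counit_l HA u). Qed.
Lemma cntR u : \sum_(p <- Delta u) t (eps p.2) * p.1 = u.
Proof. exact: (counit_r HA u). Qed.

Lemma Sinv u : S (S u) = u. Proof. exact: (S_invol HA u). Qed.

Definition bal (P : zmodType) (c : H -> H -> P) :=
  balanced (fun a (u : H) => u * t a) (fun a (v : H) => s a * v)
           (fun _ => False) (fun _ => False) c.

Lemma mkbal (P : zmodType) (c : H -> H -> P) :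
  (forall u u' v, c (u + u') v = c u v + c u' v) ->
  (forall u v v', c u (v + v') = c u v + c u v') ->
  (forall a u v, c (u * t a) v = c u (s a * v)) -> bal c.
Proof. by move=> h1 h2 h3; split. Qed.

Definition sD (P : zmodType) (c : H -> H -> P) y := \sum_(p <- Delta y) c p.1 p.2.

Lemma sD_add (P : zmodType) (c : H -> H -> P) x y :
  bal c -> sD c (x + y) = sD c x + sD c y.
Proof. by move=> hc; rewrite /sD (Delta_add HA x y hc) big_cat. Qed.

Lemma sD_0 (P : zmodType) (c : H -> H -> P) : bal c -> sD c 0 = 0.
Proof.
move=> hc; have e := sD_add 0 0 hc; rewrite addr0 in e.
by apply: (addrI (sD c 0)); rewrite addr0 -e.
Qed.

Lemma sD_sum (P : zmodType) (c : H -> H -> P) (T : Type) (l : seq T) f :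
  bal c -> sD c (\sum_(i <- l) f i) = \sum_(i <- l) sD c (f i).
Proof.
move=> hc; elim: l => [|x l IH]; first by rewrite !big_nil sD_0.
by rewrite !big_cons sD_add // IH.
Qed.

Lemma sD_one (P : zmodType) (c : H -> H -> P) : bal c -> sD c 1 = c 1 1.
Proof. by move=> hc; rewrite /sD (Delta_one HA hc) big_seq1. Qed.

Lemma sD_s (P : zmodType) (c : H -> H -> P) a y : bal c ->
  sD c (s a * y) = sD (fun u v => c (s a * u) v) y.
Proof. by move=> hc; rewrite /sD (Delta_s HA a y hc) big_map. Qed.

Lemma sD_t (P : zmodType) (c : H -> H -> P) a y : bal c ->
  sD c (t a * y) = sD (fun u v => c u (t a * v)) y.
Proof. by move=> hc; rewrite /sD (Delta_t HA a y hc) big_map. Qed.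

Lemma sD_ext (P : zmodType) (c c' : H -> H -> P) y :
  (forall u v, c u v = c' u v) -> sD c y = sD c' y.
Proof. by move=> e; apply: eq_bigr => p _; rewrite e. Qed.

Lemma sD_split (P : zmodType) (c c' : H -> H -> P) y :
  sD (fun u v => c u v + c' u v) y = sD c y + sD c' y.
Proof. by rewrite /sD big_split. Qed.

Lemma coassoc (P : zmodType) (f : H -> H -> H -> P) u :
  (forall u u' v w, f (u + u') v w = f u v w + f u' v w) ->
  (forall u v v' w, f u (v + v') w = f u v w + f u v' w) ->
  (forall u v w w', f u v (w + w') = f u v w + f u v w') ->
  (forall a u v w, f (u * t a) v w = f u (s a * v) w) ->
  (forall a u v w, f u (v * t a) w = f u v (s a * w)) ->
  \sum_(p <- Delta u) sD (fun r1 r2 => f r1 r2 p.2) p.1 =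
  \sum_(p <- Delta u) sD (fun r1 r2 => f p.1 r1 r2) p.2.
Proof.
move=> h1 h2 h3 h4 h5.
have := Delta_coassoc HA u h1 h2 h3 h4 h5.
by rewrite !big_allpairs_dep.
Qed.

Lemma bsumL (P : zmodType) (b : H -> H -> P) (T : Type) (l : seq T) f v :
  (forall m m' n, b (m + m') n = b m n + b m' n) ->
  b (\sum_(i <- l) f i) v = \sum_(i <- l) b (f i) v.
Proof.
move=> hb; have b0 : b 0 v = 0.
  by have e := hb 0 0 v; rewrite addr0 in e; apply: (addrI (b 0 v)); rewrite addr0 -e.
elim: l => [|x l IH]; first by rewrite !big_nil.
by rewrite !big_cons hb IH.
Qed.

Lemma bsumR (P : zmodType) (b : H -> H -> P) (T : Type) (l : seq T) f v :
  (forall m n n', b m (n + n') = b m n + b m n') ->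
  b v (\sum_(i <- l) f i) = \sum_(i <- l) b v (f i).
Proof.
move=> hb; have b0 : b v 0 = 0.
  by have e := hb v 0 0; rewrite addr0 in e; apply: (addrI (b v 0)); rewrite addr0 -e.
elim: l => [|x l IH]; first by rewrite !big_nil.
by rewrite !big_cons hb IH.
Qed.

Lemma stI a u : (s a * u - t a * u) \in I.
Proof.
apply: HN.1; exists [:: (u, a)]; rewrite big_seq1 /=; ring.
Qed.

Lemma modIL (P : zmodType) (b : H -> H -> P) :
  (forall m m' n, b (m + m') n = b m n + b m' n) ->
  (forall m n, m \in I -> b m n = 0) ->
  forall a u v, b (t a * u) v = b (s a * u) v.
Proof.
move=> hA hK a u v.
have -> : s a * u = t a * u + (s a * u - t a * u) by ring.
by rewrite hA (hK _ _ (stI a u)) addr0.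
Qed.

Lemma modIR (P : zmodType) (b : H -> H -> P) :
  (forall m n n', b m (n + n') = b m n + b m n') ->
  (forall m n, n \in I -> b m n = 0) ->
  forall a u v, b v (t a * u) = b v (s a * u).
Proof.
move=> hA hK a u v.
have -> : s a * u = t a * u + (s a * u - t a * u) by ring.
by rewrite hA (hK _ _ (stI a u)) addr0.
Qed.


Lemma L2R h :
    tensor_eq (fun a (u : H) => u * t a) (fun a (v : H) => s a * v)
              (fun _ => False) (fun v => v \in I) (Delta h) [:: (h, 1)] ->
    tensor_eq (fun a (u : H) => u * s a) (fun a (v : H) => s a * v)
              (fun u => u \in I) (fun _ => False) (Delta h) [:: (1, h)].
Proof.
move=> hL P b' [bL bR bA bK _].
have mIL := modIL bL bK.
pose g x w r1 r2 := b' r2 (x * (S r1 * w)).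
have gbal x w : bal (g x w).
  apply: mkbal => [u u' v|u v v'|a u v]; rewrite /g.
  - by rewrite SD mulrDl mulrDr bR.
  - by rewrite bL.
  rewrite SM St [s a * v]mulrC bA; congr (b' _ _); ring.
pose bb x y := sD (fun p1 p2 => sD (g x p2) p1) y.
have cbal x : bal (fun p1 p2 => sD (g x p2) p1).
  apply: mkbal => [u u' v|u v v'|a u v].
  - by rewrite sD_add.
  - rewrite -sD_split; apply: sD_ext => r1 r2; by rewrite /g !mulrDr bR.
  rewrite mulrC sD_t //; apply: sD_ext => r1 r2.
  rewrite /g mIL [s a * r2]mulrC bA; congr (b' _ _); ring.
have hb : balanced (fun a (u : H) => u * t a) (fun a (v : H) => s a * v)
              (fun _ => False) (fun v => v \in I) bb.
  split.
  - move=> x x' y; rewrite /bb -sD_split; apply: sD_ext => p1 p2.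
    rewrite -sD_split; apply: sD_ext => r1 r2; by rewrite /g mulrDl bR.
  - by move=> x y y'; rewrite /bb sD_add.
  - move=> a x y; rewrite /bb sD_s //; apply: sD_ext => p1 p2.
    rewrite sD_s //; apply: sD_ext => r1 r2.
    rewrite /g SM Ss; congr (b' _ _); ring.
  - by [].
  move=> x y yI; case: (HN.2 y yI) => l [hl he].
  have hd : balanced (fun a (u : H) => u * s a) (fun a (v : H) => s a * v)
                (st_ideal s t) (fun _ => False) (fun a' c => b' a' (x * c)).
    split.
    - by move=> *; rewrite bL.
    - by move=> *; rewrite mulrDr bR.
    - by move=> a m n; rewrite bA; congr (b' _ _); ring.
    - by move=> m n /HN.1 mI; apply: bK.
    - by [].
  have := he P _ hd; rewrite big_allpairs_dep /= => E.
  rewrite /bb /sD /g E big1_seq // => p /andP[_ pin].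
  by move/allP: hl => /(_ p pin) /= pI; apply: bK.
have := hL P bb hb; rewrite big_seq1 /= => E.
have E1 : bb h 1 = b' 1 h.
  by rewrite /bb sD_one // sD_one // /g S1 mul1r !mulr1.
rewrite big_seq1 /= -E1 -E.
transitivity (\sum_(p <- Delta h) sD (fun r1 r2 => sD (g r1 p.2) r2) p.1);
  last first.
  apply: (coassoc (f := fun x y z => sD (g x z) y)).
  - move=> x x' y z; rewrite -sD_split; apply: sD_ext => r1 r2.
    by rewrite /g mulrDl bR.
  - by move=> x y y' z; rewrite sD_add.
  - move=> x y z z'; rewrite -sD_split; apply: sD_ext => r1 r2.
    by rewrite /g !mulrDr bR.
  - move=> a x y z; rewrite sD_s //; apply: sD_ext => r1 r2.
    rewrite /g SM Ss; congr (b' _ _); ring.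
  - move=> a x y z; rewrite mulrC sD_t //; apply: sD_ext => r1 r2.
    rewrite /g mIL [s a * r2]mulrC bA; congr (b' _ _); ring.
apply: eq_bigr => p _; move: p.1 p.2 => y w.
transitivity (\sum_(r <- Delta y) sD (fun u1 u2 => g u1 w u2 r.2) r.1);
  last first.
  apply: (coassoc (f := fun x y z => g x w y z)).
  - by move=> *; rewrite /g mulrDl bR.
  - by move=> *; rewrite /g SD mulrDl mulrDr bR.
  - by move=> *; rewrite /g bL.
  - by move=> *; rewrite /g SM Ss; congr (b' _ _); ring.
  - move=> a x y' z; rewrite /g SM St [s a * z]mulrC bA; congr (b' _ _); ring.
have inner r1 r2 : sD (fun u1 u2 => g u1 w u2 r2) r1 = b' (r2 * s (eps r1)) w.
  rewrite /sD /g bA -(antR r1) big_distrl bsumR //; apply: eq_bigr => u _.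
  by rewrite mulrA.
rewrite (eq_bigr _ (fun r _ => inner r.1 r.2)) -bsumL //.
congr (b' _ _); rewrite -{1}(cntL y); apply: eq_bigr => r _; exact: mulrC.
Qed.


Lemma R2L h :
    tensor_eq (fun a (u : H) => u * s a) (fun a (v : H) => s a * v)
              (fun u => u \in I) (fun _ => False) (Delta h) [:: (1, h)] ->
    tensor_eq (fun a (u : H) => u * t a) (fun a (v : H) => s a * v)
              (fun _ => False) (fun v => v \in I) (Delta h) [:: (h, 1)].
Proof.
move=> hR P b [bL bR bA _ bK].
have mIR := modIR bR bK.
have bbal : bal b by apply: mkbal.
pose g w x q1 q2 := b (q1 * (S w * x)) q2.
have gbal w x : bal (g w x).
  apply: mkbal => [u u' v|u v v'|a u v]; rewrite /g.
  - by rewrite mulrDl bL.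
  - by rewrite bR.
  rewrite -bA; congr (b _ _); ring.
pose bb y x := sD (fun p1 p2 => sD (g p2 x) p1) y.
have cbal x : bal (fun p1 p2 => sD (g p2 x) p1).
  apply: mkbal => [u u' v|u v v'|a u v].
  - by rewrite sD_add.
  - rewrite -sD_split; apply: sD_ext => q1 q2; by rewrite /g SD mulrDl mulrDr bL.
  rewrite mulrC sD_t //; apply: sD_ext => q1 q2.
  rewrite /g mIR -bA SM Ss; congr (b _ _); ring.
have hb : balanced (fun a (u : H) => u * s a) (fun a (v : H) => s a * v)
              (fun u => u \in I) (fun _ => False) bb.
  split.
  - by move=> y y' x; rewrite /bb sD_add.
  - move=> y x x'; rewrite /bb -sD_split; apply: sD_ext => p1 p2.
    rewrite -sD_split; apply: sD_ext => q1 q2; by rewrite /g !mulrDr bL.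
  - move=> a y x; rewrite /bb mulrC sD_s //; apply: sD_ext => p1 p2.
    rewrite sD_s //; apply: sD_ext => q1 q2.
    rewrite /g; congr (b _ _); ring.
  - move=> y x yI; case: (HN.2 y yI) => l [hl he].
    have hd : balanced (fun a (u : H) => u * s a) (fun a (v : H) => s a * v)
                (st_ideal s t) (fun _ => False) (fun a' c => b (S c * x) a').
      split.
      - by move=> *; rewrite bR.
      - by move=> *; rewrite SD mulrDl bL.
      - by move=> a m n; rewrite [m * s a]mulrC -bA SM Ss; congr (b _ _); ring.
      - by move=> m n /HN.1 mI; apply: bK.
      - by [].
    have := he P _ hd; rewrite big_allpairs_dep /= => E.
    have E' : \sum_(p <- Delta y) \sum_(q <- Delta p.1) b (S (S q.1 * p.2) * x) q.2 = 0.
      rewrite E big1_seq // => p /andP[_ pin].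
      by move/allP: hl => /(_ p pin) /= pI; apply: bK.
    rewrite -E' /bb /sD /g; apply: eq_bigr => p _; apply: eq_bigr => q _.
    rewrite SM Sinv; congr (b _ _); ring.
  - by [].
have := hR P bb hb; rewrite big_seq1 /= => E.
have E1 : bb 1 h = b h 1.
  by rewrite /bb sD_one // sD_one // /g S1 !mul1r.
rewrite big_seq1 /= -E1 -E.
transitivity (\sum_(p <- Delta h) sD (fun r1 r2 => sD (g r1 r2) p.1) p.2);
  last first.
  symmetry; apply: (coassoc (f := fun x y z => sD (g y z) x)).
  - by move=> *; rewrite sD_add.
  - move=> x y y' z; rewrite -sD_split; apply: sD_ext => q1 q2.
    by rewrite /g SD mulrDl mulrDr bL.
  - move=> x y z z'; rewrite -sD_split; apply: sD_ext => q1 q2.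
    by rewrite /g !mulrDr bL.
  - move=> a x y z; rewrite mulrC sD_t //; apply: sD_ext => q1 q2.
    rewrite /g mIR -bA SM Ss; congr (b _ _); ring.
  - move=> a x y z; apply: sD_ext => q1 q2.
    rewrite /g SM St; congr (b _ _); ring.
have inner y w : sD (fun r1 r2 => sD (g r1 r2) y) w = sD b (t (eps w) * y).
  rewrite sD_t // /sD exchange_big /=; apply: eq_bigr => q _.
  rewrite mIR -bA -(antL w) big_distrr bsumL //=.
rewrite (eq_bigr _ (fun p _ => inner p.1 p.2)) -sD_sum // cntR.
by [].
Qed.

End Aux.

Unset Implicit Arguments.
Set Strict Implicit.

Theorem lemma3p23 (k : fieldType) (A H : comAlgType k)
    (s t : {lrmorphism A -> H}) (eps : {lrmorphism H -> A})
    (Delta : H -> seq (H * H)) (S : {lrmorphism H -> H}) (I : {pred H}) :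
  hopf_algebroid s t eps Delta S ->
  hopf_ideal s t eps Delta S I ->
  normal_ideal s t Delta S I ->
  forall h : H,
    tensor_eq (fun a (u : H) => u * t a) (fun a (v : H) => s a * v)
              (fun _ => False) (fun v => v \in I) (Delta h) [:: (h, 1)]
    <->
    tensor_eq (fun a (u : H) => u * s a) (fun a (v : H) => s a * v)
              (fun u => u \in I) (fun _ => False) (Delta h) [:: (1, h)].
Proof.
move=> HA _ HN h; split; [exact: (L2R HA HN) | exact: (R2L HA HN)].
Qed.
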